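(* Let $n\ge1$, $\varepsilon>0$, $A>0$, and define $$\Theta(\eta)=e^{-\varepsilon\left[A+(|x|^2+|y|^2)^2+\tau^2\right]^{1/2}},\qquad \eta=(x,y,\tau)\in\mathbb{H}^n.$$ Then $-\Delta_{\mathbb{H}}\Theta(\eta)\le 2\varepsilon(Q+2)\Theta(\eta)$ for all $\eta\in\mathbb{H}^n$.
   Context: $\mathbb{H}^n$ is $\mathbb{R}^{2n+1}$ with points $\eta=(x,y,\tau)$, $x,y\in\mathbb{R}^n$, $\tau\in\mathbb{R}$. The vector fields are $X_i=\partial_{x_i}-2y_i\partial_\tau$, $Y_i=\partial_{y_i}+2x_i\partial_\tau$ ($i=1,\dots,n$), the sub-Laplacian is $\Delta_{\mathbb{H}}=\sum_{i=1}^n(X_i^2+Y_i^2)$, and $Q=2n+2$. *)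

(* Defs.v *)
From Stdlib Require Import Reals.
From Coquelicot Require Import Coquelicot.
Open Scope R_scope.

(* A point of H^n is (x, y, tau) with x, y : nat -> R, of which only the
   coordinates 0 .. n-1 are used. Functions on H^n are curried. *)
Definition Hfun := (nat -> R) -> (nat -> R) -> R -> R.

Fixpoint sum_lt (n : nat) (g : nat -> R) : R :=
  match n with O => 0 | S m => sum_lt m g + g m end.

Definition upd (x : nat -> R) (i : nat) (s : R) : nat -> R :=
  fun j => if Nat.eqb j i then s else x j.

Definition dx (i : nat) (f : Hfun) : Hfun :=
  fun x y t => Derive (fun s => f (upd x i s) y t) (x i).
Definition dy (i : nat) (f : Hfun) : Hfun :=
  fun x y t => Derive (fun s => f x (upd y i s) t) (y i).
Definition dtau (f : Hfun) : Hfun :=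
  fun x y t => Derive (fun s => f x y s) t.

Definition Xv (i : nat) (f : Hfun) : Hfun :=
  fun x y t => dx i f x y t - 2 * y i * dtau f x y t.
Definition Yv (i : nat) (f : Hfun) : Hfun :=
  fun x y t => dy i f x y t + 2 * x i * dtau f x y t.

Definition subLap (n : nat) (f : Hfun) : Hfun :=
  fun x y t => sum_lt n (fun i => Xv i (Xv i f) x y t + Yv i (Yv i f) x y t).

Definition normsq (n : nat) (x : nat -> R) : R := sum_lt n (fun i => x i ^ 2).

Definition Qdim (n : nat) : R := 2 * INR n + 2.

Definition Theta (n : nat) (eps A : R) : Hfun :=
  fun x y t => exp (- eps * sqrt (A + (normsq n x + normsq n y) ^ 2 + t ^ 2)).

(* Main.v *)
Require Import Defs.
From Stdlib Require Import Reals Lra Lia.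
From Coquelicot Require Import Coquelicot.
Open Scope R_scope.

Lemma pos_in (A r t : R) : 0 < A -> 0 < A + r^2 + t^2.
Proof. intros. nra. Qed.

Ltac norm_sqrt U :=
  let S := fresh "S" in set (S := sqrt U) in *;
  repeat (match goal with |- context [sqrt ?u] => replace u with U by ring end; fold S).

Definition SS A r t := sqrt (A + r^2 + t^2).
Definition TT eps A r t := exp (- eps * SS A r t).
Definition PX eps A r xi yi t := - eps * TT eps A r t * (2*r*xi - 2*yi*t) / SS A r t.
Definition PY eps A r xi yi t := - eps * TT eps A r t * (2*r*yi + 2*xi*t) / SS A r t.

Definition VXx eps A r xi yi t :=
  - eps * (- eps * TT eps A r t * (2*r*xi) * (2*r*xi - 2*yi*t) / SS A r t ^ 2
           + TT eps A r t * (4*xi^2 + 2*r) / SS A r t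
           - TT eps A r t * (2*r*xi - 2*yi*t) * (2*r*xi) / SS A r t ^ 3).
Definition VXt eps A r xi yi t :=
  - eps * (- eps * TT eps A r t * t * (2*r*xi - 2*yi*t) / SS A r t ^ 2
           + TT eps A r t * (-2*yi) / SS A r t
           - TT eps A r t * (2*r*xi - 2*yi*t) * t / SS A r t ^ 3).
Definition VYy eps A r xi yi t :=
  - eps * (- eps * TT eps A r t * (2*r*yi) * (2*r*yi + 2*xi*t) / SS A r t ^ 2
           + TT eps A r t * (4*yi^2 + 2*r) / SS A r t
           - TT eps A r t * (2*r*yi + 2*xi*t) * (2*r*yi) / SS A r t ^ 3).
Definition VYt eps A r xi yi t :=
  - eps * (- eps * TT eps A r t * t * (2*r*yi + 2*xi*t) / SS A r t ^ 2
           + TT eps A r t * (2*xi) / SS A r t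
           - TT eps A r t * (2*r*yi + 2*xi*t) * t / SS A r t ^ 3).

Ltac dsolve U :=
  let Hp := fresh in let Hs := fresh in
  assert (Hp : 0 < U) by (apply pos_in; assumption);
  assert (Hs : 0 < sqrt U) by (apply sqrt_lt_R0; exact Hp);
  auto_derive; [repeat split; try (exact I);
     try (match goal with |- 0 < ?u => replace u with U by ring; exact Hp end);
     try (match goal with |- sqrt ?u <> 0 => replace u with U by ring; lra end)
   | norm_sqrt U; field; lra].

Lemma L0x (eps A c t xi : R) : 0 < A ->
  is_derive (fun s => TT eps A (c + s^2) t) xi
   (- eps * TT eps A (c + xi^2) t * (2 * (c+xi^2) * xi) / SS A (c + xi^2) t).
Proof. intros HA. unfold TT, SS. dsolve (A + (c+xi^2)^2 + t^2). Qed.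

Lemma L0t (eps A r t : R) : 0 < A ->
  is_derive (fun s => TT eps A r s) t
   (- eps * TT eps A r t * t / SS A r t).
Proof. intros HA. unfold TT, SS. dsolve (A + r^2 + t^2). Qed.

Lemma LXx (eps A c yi t xi : R) : 0 < A ->
  is_derive (fun s => PX eps A (c + s^2) s yi t) xi (VXx eps A (c + xi^2) xi yi t).
Proof. intros HA. unfold VXx, PX, TT, SS. dsolve (A + (c+xi^2)^2 + t^2). Qed.

Lemma LXt (eps A r xi yi t : R) : 0 < A ->
  is_derive (fun s => PX eps A r xi yi s) t (VXt eps A r xi yi t).
Proof. intros HA. unfold VXt, PX, TT, SS. dsolve (A + r^2 + t^2). Qed.

Lemma LYy (eps A c xi t yi : R) : 0 < A ->
  is_derive (fun s => PY eps A (c + s^2) xi s t) yi (VYy eps A (c + yi^2) xi yi t).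
Proof. intros HA. unfold VYy, PY, TT, SS. dsolve (A + (c+yi^2)^2 + t^2). Qed.

Lemma LYt (eps A r xi yi t : R) : 0 < A ->
  is_derive (fun s => PY eps A r xi yi s) t (VYt eps A r xi yi t).
Proof. intros HA. unfold VYt, PY, TT, SS. dsolve (A + r^2 + t^2). Qed.

Lemma upd_same x i s : upd x i s i = s.
Proof. unfold upd. rewrite Nat.eqb_refl. reflexivity. Qed.

Lemma sum_upd m x i s :
  sum_lt m (fun j => upd x i s j ^ 2) =
  sum_lt m (fun j => x j ^ 2) + (if Nat.ltb i m then s^2 - x i^2 else 0).
Proof.
  induction m; cbn [sum_lt].
  - destruct (Nat.ltb_spec i 0); [lia | ring].
  - rewrite IHm. unfold upd.
    destruct (Nat.eqb_spec m i); destruct (Nat.ltb_spec i m);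
    destruct (Nat.ltb_spec i (S m)); subst; try lia; ring.
Qed.

Lemma normsq_upd n x i s : (i < n)%nat ->
  normsq n (upd x i s) = normsq n x - x i ^ 2 + s ^ 2.
Proof.
  intros H. unfold normsq. rewrite sum_upd.
  destruct (Nat.ltb_spec i n); [ring | lia].
Qed.



Lemma dx_form n i (Phi : R -> R -> R -> R -> R) (f : Hfun) x y t : (i < n)%nat ->
  (forall x y t, f x y t = Phi (normsq n x + normsq n y) (x i) (y i) t) ->
  dx i f x y t = Derive (fun s => Phi ((normsq n x - x i ^ 2 + normsq n y) + s ^ 2) s (y i) t) (x i).
Proof.
  intros Hi Hf. unfold dx. apply Derive_ext. intros s. rewrite Hf.
  rewrite normsq_upd by exact Hi. rewrite upd_same. f_equal. ring.
Qed.

Lemma dy_form n i (Phi : R -> R -> R -> R -> R) (f : Hfun) x y t : (i < n)%nat ->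
  (forall x y t, f x y t = Phi (normsq n x + normsq n y) (x i) (y i) t) ->
  dy i f x y t = Derive (fun s => Phi ((normsq n x + (normsq n y - y i ^ 2)) + s ^ 2) (x i) s t) (y i).
Proof.
  intros Hi Hf. unfold dy. apply Derive_ext. intros s. rewrite Hf.
  rewrite normsq_upd by exact Hi. rewrite upd_same. f_equal. ring.
Qed.

Lemma dtau_form n i (Phi : R -> R -> R -> R -> R) (f : Hfun) x y t :
  (forall x y t, f x y t = Phi (normsq n x + normsq n y) (x i) (y i) t) ->
  dtau f x y t = Derive (fun s => Phi (normsq n x + normsq n y) (x i) (y i) s) t.
Proof.
  intros Hf. unfold dtau. apply Derive_ext. intros s. apply Hf.
Qed.

Lemma Xv_ext i (f g : Hfun) : (forall x y t, f x y t = g x y t) ->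
  forall x y t, Xv i f x y t = Xv i g x y t.
Proof.
  intros H x y t. unfold Xv, dx, dtau. rewrite (Derive_ext _ _ _ (fun s => H _ _ _)).
  rewrite (Derive_ext (fun s => f x y s) _ _ (fun s => H _ _ _)). reflexivity.
Qed.

Lemma Yv_ext i (f g : Hfun) : (forall x y t, f x y t = g x y t) ->
  forall x y t, Yv i f x y t = Yv i g x y t.
Proof.
  intros H x y t. unfold Yv, dy, dtau. rewrite (Derive_ext _ _ _ (fun s => H _ _ _)).
  rewrite (Derive_ext (fun s => f x y s) _ _ (fun s => H _ _ _)). reflexivity.
Qed.

Lemma X_Theta n eps A i x y t : (i < n)%nat -> 0 < A ->
  Xv i (Theta n eps A) x y t = PX eps A (normsq n x + normsq n y) (x i) (y i) t.
Proof.
  intros Hi HA. unfold Xv.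
  rewrite (dx_form n i (fun r _ _ t => TT eps A r t)) by (auto; intros; reflexivity).
  rewrite (dtau_form n i (fun r _ _ t => TT eps A r t)) by (intros; reflexivity).
  rewrite (is_derive_unique _ _ _ (L0x eps A _ t (x i) HA)).
  rewrite (is_derive_unique _ _ _ (L0t eps A _ t HA)).
  replace (normsq n x - x i ^ 2 + normsq n y + x i ^ 2) with (normsq n x + normsq n y) by ring.
  unfold PX. field. unfold SS. apply Rgt_not_eq, sqrt_lt_R0, pos_in, HA.
Qed.

Lemma Y_Theta n eps A i x y t : (i < n)%nat -> 0 < A ->
  Yv i (Theta n eps A) x y t = PY eps A (normsq n x + normsq n y) (x i) (y i) t.
Proof.
  intros Hi HA. unfold Yv.
  rewrite (dy_form n i (fun r _ _ t => TT eps A r t)) by (auto; intros; reflexivity).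
  rewrite (dtau_form n i (fun r _ _ t => TT eps A r t)) by (intros; reflexivity).
  rewrite (is_derive_unique _ _ _ (L0x eps A _ t (y i) HA)).
  rewrite (is_derive_unique _ _ _ (L0t eps A _ t HA)).
  replace (normsq n x + (normsq n y - y i ^ 2) + y i ^ 2) with (normsq n x + normsq n y) by ring.
  unfold PY. field. unfold SS. apply Rgt_not_eq, sqrt_lt_R0, pos_in, HA.
Qed.

Lemma XX_Theta n eps A i x y t : (i < n)%nat -> 0 < A ->
  Xv i (Xv i (Theta n eps A)) x y t =
  VXx eps A (normsq n x + normsq n y) (x i) (y i) t - 2 * y i * VXt eps A (normsq n x + normsq n y) (x i) (y i) t.
Proof.
  intros Hi HA.
  rewrite (Xv_ext i _ (fun x y t => PX eps A (normsq n x + normsq n y) (x i) (y i) t))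
    by (intros; apply X_Theta; auto).
  unfold Xv.
  rewrite (dx_form n i (fun r a b t => PX eps A r a b t)) by (auto; intros; reflexivity).
  rewrite (dtau_form n i (fun r a b t => PX eps A r a b t)) by (intros; reflexivity).
  rewrite (is_derive_unique _ _ _ (LXx eps A _ (y i) t (x i) HA)).
  rewrite (is_derive_unique _ _ _ (LXt eps A _ (x i) (y i) t HA)).
  replace (normsq n x - x i ^ 2 + normsq n y + x i ^ 2) with (normsq n x + normsq n y) by ring.
  reflexivity.
Qed.

Lemma YY_Theta n eps A i x y t : (i < n)%nat -> 0 < A ->
  Yv i (Yv i (Theta n eps A)) x y t =
  VYy eps A (normsq n x + normsq n y) (x i) (y i) t + 2 * x i * VYt eps A (normsq n x + normsq n y) (x i) (y i) t.
Proof.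
  intros Hi HA.
  rewrite (Yv_ext i _ (fun x y t => PY eps A (normsq n x + normsq n y) (x i) (y i) t))
    by (intros; apply Y_Theta; auto).
  unfold Yv.
  rewrite (dy_form n i (fun r a b t => PY eps A r a b t)) by (auto; intros; reflexivity).
  rewrite (dtau_form n i (fun r a b t => PY eps A r a b t)) by (intros; reflexivity).
  rewrite (is_derive_unique _ _ _ (LYy eps A _ (x i) t (y i) HA)).
  rewrite (is_derive_unique _ _ _ (LYt eps A _ (x i) (y i) t HA)).
  replace (normsq n x + (normsq n y - y i ^ 2) + y i ^ 2) with (normsq n x + normsq n y) by ring.
  reflexivity.
Qed.

Lemma per_i eps A r xi yi t : 0 < eps -> 0 < A ->
  - (VXx eps A r xi yi t - 2 * yi * VXt eps A r xi yi t
     + (VYy eps A r xi yi t + 2 * xi * VYt eps A r xi yi t))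
  <= eps * TT eps A r t / SS A r t * (8 * xi^2 + 8 * yi^2 + 4 * r).
Proof.
  intros He HA.
  assert (HS : 0 < SS A r t) by (apply sqrt_lt_R0, pos_in, HA).
  assert (HT : 0 < TT eps A r t) by apply exp_pos.
  set (a := 2*r*xi - 2*yi*t). set (b := 2*r*yi + 2*xi*t).
  assert (E : - (VXx eps A r xi yi t - 2 * yi * VXt eps A r xi yi t
     + (VYy eps A r xi yi t + 2 * xi * VYt eps A r xi yi t)) =
     eps * TT eps A r t / SS A r t * (8 * xi^2 + 8 * yi^2 + 4 * r)
     - eps * TT eps A r t * ((a^2 + b^2) * (eps * SS A r t + 1) / SS A r t ^ 3)).
  { unfold VXx, VXt, VYy, VYt, a, b. field. lra. }
  rewrite E.
  assert (0 <= eps * TT eps A r t * ((a^2 + b^2) * (eps * SS A r t + 1) / SS A r t ^ 3)).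
  { apply Rmult_le_pos. nra. unfold Rdiv. apply Rmult_le_pos.
    apply Rmult_le_pos; nra. left. apply Rinv_0_lt_compat. apply pow_lt. exact HS. }
  lra.
Qed.

Lemma sum_bound m (F G : nat -> R) : (forall i, (i < m)%nat -> - F i <= G i) ->
  - sum_lt m F <= sum_lt m G.
Proof.
  induction m; intros H; cbn [sum_lt].
  - lra.
  - assert (H1 := H m (Nat.lt_succ_diag_r m)).
    assert (H2 : - sum_lt m F <= sum_lt m G) by (apply IHm; intros; apply H; lia).
    lra.
Qed.

Lemma sum_G m (c r : R) x y :
  sum_lt m (fun i => c * (8 * x i ^ 2 + 8 * y i ^ 2 + 4 * r)) =
  c * (8 * normsq m x + 8 * normsq m y + 4 * INR m * r).
Proof.
  unfold normsq. induction m; cbn [sum_lt].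
  - simpl. ring.
  - rewrite IHm. rewrite S_INR. ring.
Qed.

Lemma normsq_nonneg m x : 0 <= normsq m x.
Proof.
  unfold normsq. induction m; cbn [sum_lt]. lra. nra.
Qed.

Theorem mainTheorem2 (n : nat) (eps A : R) :
  (1 <= n)%nat -> 0 < eps -> 0 < A ->
  forall (x y : nat -> R) (t : R),
    - subLap n (Theta n eps A) x y t <= 2 * eps * (Qdim n + 2) * Theta n eps A x y t.
Proof.
  intros Hn He HA x y t. unfold subLap.
  set (r := normsq n x + normsq n y).
  eapply Rle_trans.
  { apply (sum_bound n _ (fun i => eps * TT eps A r t / SS A r t * (8 * x i^2 + 8 * y i^2 + 4 * r))).
    intros i Hi. rewrite XX_Theta, YY_Theta by assumption. apply per_i; assumption. }
  rewrite sum_G.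
  assert (HS : 0 < SS A r t) by (apply sqrt_lt_R0, pos_in, HA).
  assert (HT : 0 < TT eps A r t) by apply exp_pos.
  assert (Hr : 0 <= r) by (unfold r; pose proof (normsq_nonneg n x); pose proof (normsq_nonneg n y); lra).
  assert (HrS : r <= SS A r t).
  { unfold SS. rewrite <- (sqrt_pow2 r Hr) at 1. apply sqrt_le_1_alt. nra. }
  assert (HN : 0 <= INR n) by apply pos_INR.
  change (Theta n eps A x y t) with (TT eps A r t).
  unfold Qdim. fold r.
  assert (Hq : r / SS A r t <= 1).
  { apply (Rmult_le_reg_r (SS A r t)); [exact HS|]. unfold Rdiv. rewrite Rmult_assoc, Rinv_l by lra. lra. }
  replace (8 * normsq n x + 8 * normsq n y + 4 * INR n * r) with (8 * r + 4 * INR n * r) by (unfold r; ring).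
  replace (eps * TT eps A r t / SS A r t * (8 * r + 4 * INR n * r))
    with ((eps * TT eps A r t * (8 + 4 * INR n)) * (r / SS A r t)) by (field; lra).
  assert (0 <= eps * TT eps A r t * (8 + 4 * INR n)) by (apply Rmult_le_pos; nra).
  replace (2 * eps * (2 * INR n + 2 + 2) * TT eps A r t)
    with ((eps * TT eps A r t * (8 + 4 * INR n)) * 1) by ring.
  apply Rmult_le_compat_l; assumption.
Qed.
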